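(* Let $F$ be a CD-function. Then there is a unique strictly positive solution $\varphi:(0,\infty)\to(0,\infty)$ of the ODE $\dot\varphi(t)+F(\varphi(t))=0$ for $t>0$ with $\lim_{t\to0+}\varphi(t)=\infty$. This function is strictly decreasing and log-convex on $(0,\infty)$, and $\lim_{t\to\infty}\varphi(t)=0$.
   Context: A CD-function is a continuous function $F:[0,\infty)\to[0,\infty)$ with $F(0)=0$, such that $x\mapsto F(x)/x$ is strictly increasing on $(0,\infty)$, and $\int_1^\infty dr/F(r)<\infty$. *)

(* Defs.v *)
From Stdlib Require Import Reals Lra.
Open Scope R_scope.

Definition continuous_on_nonneg (F : R -> R) : Prop :=
  forall x, 0 <= x -> limit1_in F (fun y => 0 <= y) (F x) x.

Definition improper_integral_1_infty_finite (g : R -> R) : Prop :=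
  (forall b, 1 <= b -> inhabited (Riemann_integrable g 1 b)) /\
  exists L : R, forall eps, 0 < eps -> exists M, forall b (pr : Riemann_integrable g 1 b),
      M <= b -> Rabs (RiemannInt pr - L) < eps.

(* CD-function: F : [0,oo) -> [0,oo) continuous, F 0 = 0, F(x)/x strictly
   increasing on (0,oo), int_1^oo dr/F(r) < oo.  F is given as a total
   function R -> R; only its values on [0,oo) matter. *)
Definition CD_function (F : R -> R) : Prop :=
  continuous_on_nonneg F /\
  (forall x, 0 <= x -> 0 <= F x) /\
  F 0 = 0 /\
  (forall x y, 0 < x -> x < y -> F x / x < F y / y) /\
  improper_integral_1_infty_finite (fun r => / F r).

Definition CD_solution (F phi : R -> R) : Prop :=
  (forall t, 0 < t -> 0 < phi t) /\
  (forall t, 0 < t -> derivable_pt_lim phi t (- F (phi t))) /\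
  (forall M, exists d, 0 < d /\ forall t, 0 < t < d -> M < phi t).

Definition strictly_decreasing_pos (phi : R -> R) : Prop :=
  forall s t, 0 < s -> s < t -> phi t < phi s.

Definition log_convex_pos (phi : R -> R) : Prop :=
  forall x y l, 0 < x -> 0 < y -> 0 <= l <= 1 ->
    ln (phi (l * x + (1 - l) * y)) <= l * ln (phi x) + (1 - l) * ln (phi y).

Definition tends_to_zero_at_infty (phi : R -> R) : Prop :=
  forall eps, 0 < eps -> exists T, forall t, T < t -> Rabs (phi t) < eps.

(* Main.v *)
Require Import Defs.
From Stdlib Require Import Reals Lra.
From Coquelicot Require Import Coquelicot.
Open Scope R_scope.

Lemma Fpos F : CD_function F -> forall x, 0 < x -> 0 < F x.
Proof.
  intros [_ [Hnn [_ [Hinc _]]]] x Hx.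
  assert (H1 := Hinc (x/2) x ltac:(lra) ltac:(lra)).
  assert (H2 : 0 <= F (x/2) / (x/2)).
  { apply Rmult_le_pos. apply Hnn; lra. left; apply Rinv_0_lt_compat; lra. }
  assert (H3 : 0 < F x / x) by lra.
  assert (H4 : F x = (F x / x) * x) by (field; lra).
  rewrite H4. apply Rmult_lt_0_compat; lra.
Qed.

Lemma Fcont F : CD_function F -> forall x, 0 < x -> continuity_pt F x.
Proof.
  intros [Hc _] x Hx eps Heps.
  destruct (Hc x (Rlt_le _ _ Hx) eps Heps) as [alp [Ha H]].
  exists (Rmin alp x). split. apply Rmin_pos; lra.
  intros y [_ Hy]. apply H. split.
  - simpl in Hy. unfold R_dist in Hy. assert (Rabs (y - x) < x) by (eapply Rlt_le_trans; [exact Hy| apply Rmin_r]).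
    apply Rabs_def2 in H0. lra.
  - eapply Rlt_le_trans; [exact Hy| apply Rmin_l].
Qed.

Lemma gcont F : CD_function F -> forall x, 0 < x -> continuous (fun r => / F r) x.
Proof.
  intros hF x Hx. apply continuity_pt_filterlim.
  apply (continuity_pt_inv F x (Fcont F hF x Hx)).
  apply Rgt_not_eq, (Fpos F hF x Hx).
Qed.

Definition H F y := RInt (fun r => / F r) 1 y.

Lemma H_deriv F : CD_function F -> forall y, 0 < y -> derivable_pt_lim (H F) y (/ F y).
Proof.
  intros hF y Hy. apply is_derive_Reals. unfold H.
  apply (is_derive_RInt (fun r => / F r) (fun b => RInt (fun r => / F r) 1 b) 1 y).
  - assert (Hp : 0 < y/2) by lra.
    exists (mkposreal _ Hp). intros b Hb.
    change (Rabs (b - y) < y/2) in Hb. apply Rabs_def2 in Hb.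
    apply (@RInt_correct R_CompleteNormedModule), (@ex_RInt_continuous R_CompleteNormedModule). intros z Hz.
    apply gcont; auto.
    assert (0 < Rmin 1 b) by (apply Rmin_pos; lra). lra.
  - apply gcont; auto.
Qed.
Lemma incr_deriv f f' a b : a < b ->
  (forall c, a <= c <= b -> derivable_pt_lim f c (f' c)) ->
  (forall c, a <= c <= b -> 0 < f' c) -> f a < f b.
Proof.
  intros Hab Hd Hp. destruct (MVT_cor2 f f' a b Hab Hd) as [c [Hc Hc2]].
  assert (0 < f' c * (b - a)) by (apply Rmult_lt_0_compat; [apply Hp; lra| lra]). lra.
Qed.

Lemma nondecr_deriv f f' a b : a <= b ->
  (forall c, a <= c <= b -> derivable_pt_lim f c (f' c)) ->
  (forall c, a <= c <= b -> 0 <= f' c) -> f a <= f b.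
Proof.
  intros Hab Hd Hp. destruct (Rle_lt_or_eq_dec _ _ Hab) as [Hab'| ->]; [|lra].
  destruct (MVT_cor2 f f' a b Hab' Hd) as [c [Hc Hc2]].
  assert (0 <= f' c * (b - a)) by (apply Rmult_le_pos; [apply Hp; lra| lra]). lra.
Qed.

Lemma H_incr F : CD_function F -> forall a b, 0 < a -> a < b -> H F a < H F b.
Proof.
  intros hF a b Ha Hab. apply (incr_deriv _ (fun y => / F y)); auto.
  - intros c Hc. apply H_deriv; auto; lra.
  - intros c Hc. apply Rinv_0_lt_compat, Fpos; auto; lra.
Qed.

Lemma H_lim F : CD_function F -> exists L, forall eps, 0 < eps ->
  exists M, forall b, M <= b -> Rabs (H F b - L) < eps.
Proof.
  intros hF. destruct hF as [_ [_ [_ [_ [Hi1 [L HL]]]]]].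
  exists L. intros eps Heps. destruct (HL eps Heps) as [M HM].
  exists (Rmax M 1). intros b Hb.
  destruct (Hi1 b ltac:(assert (1 <= Rmax M 1) by apply Rmax_r; lra)) as [pr].
  unfold H. rewrite (RInt_Reals _ _ _ pr). apply HM.
  assert (M <= Rmax M 1) by apply Rmax_l; lra.
Qed.

Lemma H_ltL F L : CD_function F -> (forall eps, 0 < eps ->
  exists M, forall b, M <= b -> Rabs (H F b - L) < eps) ->
  forall y, 0 < y -> H F y < L.
Proof.
  intros hF HL y Hy.
  assert (H1 := H_incr F hF y (y+1) Hy ltac:(lra)).
  destruct (Rle_or_lt (H F (y+1)) L) as [|Hc]; [lra|].
  destruct (HL (H F (y+1) - L) ltac:(lra)) as [M HM].
  set (b := Rmax M (y+2)).
  assert (Mb : M <= b) by apply Rmax_l. assert (yb : y+2 <= b) by apply Rmax_r.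
  assert (K2 := HM b Mb). assert (K3 := H_incr F hF (y+1) b ltac:(lra) ltac:(lra)).
  apply Rabs_def2 in K2. lra.
Qed.

Lemma H_low F : CD_function F -> forall y, 0 < y <= 1 -> H F y <= ln y * / F 1.
Proof.
  intros hF y Hy.
  assert (F1 : 0 < F 1) by (apply Fpos; auto; lra).
  assert (D := nondecr_deriv (fun z => H F z - ln z * / F 1)
     (fun z => / F z - / z * / F 1) y 1 ltac:(lra)).
  simpl in D.
  assert (E : H F 1 = 0) by (unfold H; apply (@RInt_point R_CompleteNormedModule)).
  rewrite E, ln_1 in D.
  cut (H F y - ln y * / F 1 <= 0 - 0 * / F 1). lra.
  apply D.
  - intros c Hc. apply derivable_pt_lim_minus.
    + apply H_deriv; auto; lra.
    + replace (/ c * / F 1) with (/ c * / F 1 + ln c * 0) by ring.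
      apply (derivable_pt_lim_mult ln (fun _ => / F 1) c (/ c) 0).
      * apply derivable_pt_lim_ln; lra.
      * apply derivable_pt_lim_const.
  - intros c Hc.
    assert (Fc := Fpos F hF c ltac:(lra)).
    assert (Hr : F c <= F 1 * c).
    { destruct (Rle_lt_or_eq_dec _ _ (proj2 Hc)) as [Hlt| ->]; [|lra].
      destruct hF as [_ [_ [_ [Hinc _]]]].
      assert (X := Hinc c 1 ltac:(lra) Hlt).
      unfold Rdiv in X. rewrite Rinv_1, Rmult_1_r in X.
      apply Rmult_lt_compat_r with (r := c) in X; [|lra].
      rewrite Rmult_assoc, Rinv_l in X; lra. }
    assert (/ F c - / c * / F 1 = (F 1 * c - F c) * / (F c * c * F 1)) by (field; lra).
    rewrite H0. apply Rmult_le_pos; [lra|].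
    left. apply Rinv_0_lt_compat. repeat apply Rmult_lt_0_compat; lra.
Qed.

Lemma MVT_G F : CD_function F -> forall u v, 0 < u -> 0 < v -> u <> v ->
  exists xi, 0 < xi /\ Rabs (xi - v) <= Rabs (u - v) /\
    H F u - H F v = / F xi * (u - v).
Proof.
  intros hF u v Hu Hv Huv.
  destruct (Rlt_or_le u v) as [Hlt|Hle].
  - destruct (MVT_cor2 (H F) (fun y => / F y) u v Hlt) as [c [Hc1 Hc2]].
    { intros c Hc. apply H_deriv; auto; lra. }
    exists c. split; [lra|split].
    + rewrite Rabs_left by lra. rewrite Rabs_left by lra. lra.
    + lra.
  - assert (Hlt : v < u) by lra.
    destruct (MVT_cor2 (H F) (fun y => / F y) v u Hlt) as [c [Hc1 Hc2]].
    { intros c Hc. apply H_deriv; auto; lra. }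
    exists c. split; [lra|split].
    + rewrite Rabs_right by lra. rewrite Rabs_right by lra. lra.
    + lra.
Qed.

Lemma convex_core u u' : (forall t, 0 < t -> derivable_pt_lim u t (u' t)) ->
  (forall s t, 0 < s -> s < t -> u' s <= u' t) ->
  forall x y l, 0 < x -> x < y -> 0 < l < 1 ->
  u (l * x + (1 - l) * y) <= l * u x + (1 - l) * u y.
Proof.
  intros Hd Hm x y l Hx Hxy Hl.
  set (z := l * x + (1 - l) * y).
  assert (Hz1 : x < z). { unfold z. nra. }
  assert (Hz2 : z < y). { unfold z. nra. }
  destruct (MVT_cor2 u u' x z Hz1) as [c1 [E1 Hc1]].
  { intros c Hc. apply Hd; lra. }
  destruct (MVT_cor2 u u' z y Hz2) as [c2 [E2 Hc2]].
  { intros c Hc. apply Hd; lra. }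
  assert (Hm12 : u' c1 <= u' c2) by (apply Hm; lra).
  assert (E3 : z - x = (1 - l) * (y - x)) by (unfold z; ring).
  assert (E4 : y - z = l * (y - x)) by (unfold z; ring).
  rewrite E3 in E1. rewrite E4 in E2.
  assert (P : 0 <= l * (1 - l) * (y - x) * (u' c2 - u' c1)).
  { apply Rmult_le_pos; [|lra]. apply Rmult_le_pos; [|lra]. nra. }
  assert (l * (u z - u x) <= (1 - l) * (u y - u z)).
  { rewrite E1, E2. nra. }
  nra.
Qed.

Lemma convex_lemma u u' : (forall t, 0 < t -> derivable_pt_lim u t (u' t)) ->
  (forall s t, 0 < s -> s < t -> u' s <= u' t) ->
  forall x y l, 0 < x -> 0 < y -> 0 <= l <= 1 ->
  u (l * x + (1 - l) * y) <= l * u x + (1 - l) * u y.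
Proof.
  intros Hd Hm x y l Hx Hy Hl.
  destruct (Req_dec l 0) as [->|Hl0].
  { replace (0 * x + (1 - 0) * y) with y by ring. lra. }
  destruct (Req_dec l 1) as [->|Hl1].
  { replace (1 * x + (1 - 1) * y) with x by ring. lra. }
  destruct (Rtotal_order x y) as [Hlt|[->|Hgt]].
  - apply (convex_core u u'); auto; lra.
  - replace (l * y + (1 - l) * y) with y by ring. lra.
  - replace (l * x + (1 - l) * y) with ((1 - l) * y + (1 - (1 - l)) * x) by ring.
    assert (K := convex_core u u' Hd Hm y x (1 - l) Hy Hgt ltac:(lra)). lra.
Qed.

From Stdlib Require Import IndefiniteDescription.

Theorem lemma3p5 (F : R -> R) (hF : CD_function F) :
  exists phi : R -> R,
    CD_solution F phi /\
    (forall psi : R -> R, CD_solution F psi -> forall t, 0 < t -> psi t = phi t) /\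
    strictly_decreasing_pos phi /\
    log_convex_pos phi /\
    tends_to_zero_at_infty phi.
Proof.
  destruct (H_lim F hF) as [L HL].
  assert (F1 : 0 < F 1) by (apply Fpos; auto; lra).
  assert (HltL := H_ltL F L hF HL).
  assert (Hinc := H_incr F hF).
  assert (Gord : forall a b, 0 < a -> 0 < b -> H F a < H F b -> a < b).
  { intros a b Ha Hb Hab. destruct (Rtotal_order a b) as [|[->|Hc]]; auto; [lra|].
    assert (K := Hinc b a Hb Hc). lra. }
  assert (Hlow : forall m, exists y, 0 < y /\ H F y < m).
  { intros m. set (y := Rmin 1 (exp ((m - 1) * F 1))).
    assert (Hy0 : 0 < y) by (apply Rmin_pos; [lra| apply exp_pos]).
    assert (Hy1 : y <= 1) by apply Rmin_l.
    assert (Hy2 : y <= exp ((m - 1) * F 1)) by apply Rmin_r.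
    exists y. split; auto.
    assert (K := H_low F hF y ltac:(lra)).
    assert (K2 : ln y <= (m - 1) * F 1).
    { rewrite <- (ln_exp ((m - 1) * F 1)). apply ln_le; auto. }
    assert (K3 : ln y * / F 1 <= m - 1).
    { replace (m - 1) with ((m - 1) * F 1 * / F 1) by (field; lra).
      apply Rmult_le_compat_r; [left; apply Rinv_0_lt_compat; lra| lra]. }
    lra. }
  assert (Hhigh : forall m, m < L -> exists y, 0 < y /\ m < H F y).
  { intros m Hm. destruct (HL (L - m) ltac:(lra)) as [M HM].
    exists (Rmax M 1). split. { assert (1 <= Rmax M 1) by apply Rmax_r. lra. }
    assert (K := HM (Rmax M 1) (Rmax_l _ _)). apply Rabs_def2 in K. lra. }
  assert (Hex : forall t, exists y, 0 < t -> 0 < y /\ H F y = L - t).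
  { intros t. destruct (Rlt_or_le 0 t) as [Ht|Ht]; [|exists 0; intros; lra].
    destruct (Hlow (L - t)) as [a [Ha Ga]].
    destruct (Hhigh (L - t) ltac:(lra)) as [b [Hb Gb]].
    assert (Hab : a < b) by (apply Gord; auto; lra).
    destruct (Ranalysis5.IVT_interv (fun z => H F z - (L - t)) a b) as [z [Hz Ez]]; auto; try lra.
    { intros c Hc. apply derivable_continuous_pt.
      exists (/ F c - 0). apply derivable_pt_lim_minus.
      - apply H_deriv; auto; lra.
      - apply derivable_pt_lim_const. }
    exists z. intros _. split; lra. }
  set (phi := fun t => proj1_sig (constructive_indefinite_description _ (Hex t))).
  assert (Hphi : forall t, 0 < t -> 0 < phi t /\ H F (phi t) = L - t).
  { intros t Ht. unfold phi. destruct (constructive_indefinite_description _ (Hex t)) as [y Hy].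
    simpl. auto. }
  clearbody phi.
  assert (Hdec : strictly_decreasing_pos phi).
  { intros s t Hs Hst. destruct (Hphi s Hs) as [P1 E1]. destruct (Hphi t ltac:(lra)) as [P2 E2].
    apply Gord; auto; lra. }
  assert (Hcont : forall t, 0 < t -> forall eps, 0 < eps -> exists d, 0 < d /\
     forall s, Rabs (s - t) < d -> Rabs (phi s - phi t) < eps).
  { intros t Ht eps Heps. destruct (Hphi t Ht) as [P0 E0].
    set (e := Rmin eps (phi t) / 2).
    assert (He : 0 < e) by (unfold e; assert (0 < Rmin eps (phi t)) by (apply Rmin_pos; lra); lra).
    assert (He1 : e < eps) by (unfold e; assert (Rmin eps (phi t) <= eps) by apply Rmin_l;
      assert (0 < Rmin eps (phi t)) by (apply Rmin_pos; lra); lra).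
    assert (He2 : e < phi t) by (unfold e; assert (Rmin eps (phi t) <= phi t) by apply Rmin_r;
      assert (0 < Rmin eps (phi t)) by (apply Rmin_pos; lra); lra).
    assert (K1 := Hinc (phi t - e) (phi t) ltac:(lra) ltac:(lra)).
    assert (K2 := Hinc (phi t) (phi t + e) ltac:(lra) ltac:(lra)).
    set (d := Rmin t (Rmin (H F (phi t) - H F (phi t - e)) (H F (phi t + e) - H F (phi t)))).
    assert (Hd1 : d <= t) by apply Rmin_l.
    assert (Hd2 : d <= H F (phi t) - H F (phi t - e)) by (eapply Rle_trans; [apply Rmin_r| apply Rmin_l]).
    assert (Hd3 : d <= H F (phi t + e) - H F (phi t)) by (eapply Rle_trans; [apply Rmin_r| apply Rmin_r]).
    assert (Hd0 : 0 < d) by (apply Rmin_pos; [lra| apply Rmin_pos; lra]).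
    exists d. split; auto. intros s Hs. apply Rabs_def2 in Hs.
    destruct (Hphi s ltac:(lra)) as [P1 E1].
    assert (A1 : phi t - e < phi s) by (apply Gord; lra).
    assert (A2 : phi s < phi t + e) by (apply Gord; lra).
    apply Rabs_def1; lra. }
  assert (Hder : forall t, 0 < t -> derivable_pt_lim phi t (- F (phi t))).
  { intros t Ht eps Heps. destruct (Hphi t Ht) as [P0 E0].
    destruct (Fcont F hF (phi t) P0 eps Heps) as [eta [Heta Feta]].
    destruct (Hcont t Ht eta Heta) as [d [Hd Cd]].
    assert (Hdp : 0 < Rmin d t) by (apply Rmin_pos; lra).
    exists (mkposreal _ Hdp). intros h Hh0 Hh. simpl in Hh.
    assert (Hh1 : Rabs h < d) by (eapply Rlt_le_trans; [exact Hh| apply Rmin_l]).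
    assert (Hh2 : Rabs h < t) by (eapply Rlt_le_trans; [exact Hh| apply Rmin_r]).
    assert (Hth : 0 < t + h) by (apply Rabs_def2 in Hh2; lra).
    destruct (Hphi (t + h) Hth) as [P1 E1].
    assert (Hne : phi (t + h) <> phi t).
    { intros Heq. rewrite Heq in E1. lra. }
    destruct (MVT_G F hF (phi (t + h)) (phi t) P1 P0 Hne) as [xi [Pxi [Dxi Exi]]].
    rewrite E1, E0 in Exi.
    assert (Fxi := Fpos F hF xi Pxi).
    assert (Q : (phi (t + h) - phi t) / h = - F xi).
    { assert (Hh' : h = / F xi * (phi t - phi (t + h))) by lra.
      assert (Q0 : forall p1 p0 hh, hh = / F xi * (p0 - p1) -> p1 <> p0 -> (p1 - p0) / hh = - F xi).
      { intros p1 p0 hh Ehh Hp. subst hh. field. split; [lra|]. intro Z. apply Hp. lra. }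
      apply Q0; auto. }
    rewrite Q.
    assert (Cth : Rabs (phi (t + h) - phi t) < eta).
    { apply Cd. replace (t + h - t) with h by ring. auto. }
    destruct (Req_dec xi (phi t)) as [->|Hxn].
    { replace (- F (phi t) - - F (phi t)) with 0 by ring. rewrite Rabs_R0. auto. }
    assert (K := Feta xi). simpl in K. unfold R_dist in K.
    replace (- F xi - - F (phi t)) with (- (F xi - F (phi t))) by ring.
    rewrite Rabs_Ropp. apply K. split.
    - split; [exact I| auto].
    - lra. }
  exists phi. split; [|split; [|split; [auto|split]]].
  -
    split; [intros t Ht; apply Hphi; auto| split; [exact Hder|]].
    intros M. set (M2 := Rmax M 1).
    assert (HM2 : M <= M2) by apply Rmax_l.
    assert (HM2' : 1 <= M2) by apply Rmax_r.
    exists (L - H F M2). split. { assert (K := HltL M2 ltac:(lra)). lra. }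
    intros t [Ht Htd]. destruct (Hphi t Ht) as [P E].
    assert (M2 < phi t) by (apply Gord; lra). lra.
  -
    intros psi [Ppsi [Dpsi Bpsi]].
    set (k := fun t => H F (psi t) + t).
    assert (Kd : forall t, 0 < t -> derivable_pt_lim k t 0).
    { intros t Ht.
      replace 0 with (/ F (psi t) * - F (psi t) + 1).
      2: { field. apply Rgt_not_eq, Fpos; auto. }
      apply (derivable_pt_lim_plus (comp (H F) psi) id).
      - apply derivable_pt_lim_comp; auto. apply H_deriv; auto.
      - apply derivable_pt_lim_id. }
    assert (Kc : forall a b, 0 < a -> a <= b -> k a = k b).
    { intros a b Ha Hab. apply Rle_antisym.
      - apply (nondecr_deriv k (fun _ => 0)); auto.
        + intros c Hc. apply Kd; lra.
        + intros; lra.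
      - assert (K := nondecr_deriv (fun x => - k x) (fun _ => - 0) a b Hab).
        cut (- k a <= - k b). lra. apply K.
        + intros c Hc. apply (derivable_pt_lim_opp k). apply Kd; lra.
        + intros; lra. }
    assert (KL : forall t, 0 < t -> k t = L).
    { intros t Ht.
      assert (Kapprox : forall eps, 0 < eps -> Rabs (k t - L) < eps).
      { intros eps Heps. destruct (HL eps Heps) as [M HM].
        destruct (Bpsi M) as [d [Hd Bd]].
        set (s := Rmin t (Rmin d eps) / 2).
        assert (Hm0 : 0 < Rmin t (Rmin d eps)) by (apply Rmin_pos; [lra| apply Rmin_pos; lra]).
        assert (Hm1 : Rmin t (Rmin d eps) <= t) by apply Rmin_l.
        assert (Hm2 : Rmin t (Rmin d eps) <= d) by (eapply Rle_trans; [apply Rmin_r| apply Rmin_l]).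
        assert (Hm3 : Rmin t (Rmin d eps) <= eps) by (eapply Rle_trans; [apply Rmin_r| apply Rmin_r]).
        assert (Hs0 : 0 < s) by (unfold s; lra).
        rewrite <- (Kc s t Hs0 ltac:(unfold s; lra)).
        assert (B := Bd s ltac:(unfold s; lra)).
        assert (K1 := HM (psi s) ltac:(lra)).
        assert (K2 := HltL (psi s) (Ppsi s Hs0)).
        apply Rabs_def2 in K1. unfold k. apply Rabs_def1; unfold s in *; lra. }
      destruct (Req_dec (k t) L) as [|Hn]; auto.
      assert (K := Kapprox (Rabs (k t - L)) ltac:(apply Rabs_pos_lt; lra)). lra. }
    intros t Ht. assert (K := KL t Ht). unfold k in K.
    destruct (Hphi t Ht) as [P E].
    assert (Pt := Ppsi t Ht).
    destruct (Rtotal_order (psi t) (phi t)) as [Hc|[|Hc]]; auto.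
    + assert (K2 := Hinc _ _ Pt Hc). lra.
    + assert (K2 := Hinc _ _ P Hc). lra.
  -
    intros x y l Hx Hy Hl.
    apply (convex_lemma (fun t => ln (phi t)) (fun t => / phi t * - F (phi t))); auto.
    + intros t Ht. destruct (Hphi t Ht) as [P E].
      apply (derivable_pt_lim_comp phi ln). apply Hder; auto. apply derivable_pt_lim_ln; auto.
    + intros s t Hs Hst.
      destruct (Hphi s Hs) as [P1 E1]. destruct (Hphi t ltac:(lra)) as [P2 E2].
      destruct hF as [_ [_ [_ [Hi _]]]].
      assert (K := Hi (phi t) (phi s) P2 (Hdec s t Hs Hst)).
      unfold Rdiv in K. lra.
  -
    intros eps Heps. exists (L - H F eps). intros t Ht.
    assert (Ht0 : 0 < t) by (assert (K := HltL eps Heps); lra).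
    destruct (Hphi t Ht0) as [P E].
    rewrite Rabs_right by lra. apply Gord; lra.
Qed.
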